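(* Let $p$ be a prime, $k$ a positive integer with $p\nmid k$, and $\chi_k$ a Dirichlet character modulo $k$. Define $\mathfrak{x}_k(p^n)=\left(\chi_k(p)\right)^n$ for all $n\in\mathbb{Z}$. For $s\in\mathbb{C}$ with $\mathrm{Re}(s)>0$, the twisted Gelfand–Graev–Tate gamma function \[ \Gamma_{\mathfrak{x}}(s)=\int_{\mathbb{Q}_p} e^{2\pi i\xi}\,|\xi|_p^{s-1}\,\mathfrak{x}_k\!\left(|\xi|_p^{-1}\right)d\xi \] is given by \[ \Gamma_{\mathfrak{x}}(s)=\frac{\chi_k(p)-p^{s-1}}{\chi_k(p)\left(1-\chi_k(p)\,p^{-s}\right)}. \]
   Context: $\mathbb{Q}_p$ is the field of $p$-adic numbers with norm $|\cdot|_p$, and $d\xi$ is the additive Haar measure on $\mathbb{Q}_p$ normalized so that $\mathbb{Z}_p=\{|\xi|_p\le1\}$ has measure $1$. For $\xi\in\mathbb{Q}_p$, $e^{2\pi i\xi}$ denotes $\exp(2\pi i\{\xi\}_p)$, where $\{\xi\}_p\in\mathbb{Q}$ is the fractional part of $\xi$ in its $p$-adic expansion (the standard additive character of $\mathbb{Q}_p$). Since $p\nmid k$, $\chi_k(p)$ is a root of unity, so $\mathfrak{x}_k(p^n)$ is defined for negative $n$ as well. The integral is understood as the sum over the shells $\{|\xi|_p=p^n\}$, $n\in\mathbb{Z}$. *)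

(* Defs.v *)
From Stdlib Require Import Reals ZArith Znumtheory Lra Lia.
From Coquelicot Require Import Coquelicot.

Open Scope R_scope.

Definition is_dirichlet_character (k : Z) (chi : Z -> C) : Prop :=
  (forall m n : Z, chi (m * n)%Z = Cmult (chi m) (chi n)) /\
  (forall n : Z, chi (n + k)%Z = chi n) /\
  chi 1%Z = RtoC 1 /\
  (forall n : Z, Z.gcd n k <> 1%Z -> chi n = RtoC 0).

Fixpoint Cpow_nat (c : C) (n : nat) : C :=
  match n with O => RtoC 1 | S m => Cmult c (Cpow_nat c m) end.
Definition Cpow_Z (c : C) (n : Z) : C :=
  match n with
  | Z0 => RtoC 1
  | Zpos q => Cpow_nat c (Pos.to_nat q)
  | Zneg q => Cinv (Cpow_nat c (Pos.to_nat q))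
  end.

(** Complex power x^z := exp(z ln x) of a positive real x. *)
Definition Cpow_pos (x : R) (z : C) : C :=
  Cmult (RtoC (exp (Re z * ln x)))
        (cos (Im z * ln x), sin (Im z * ln x)).

Definition e2pii (t : R) : C := (cos (2 * PI * t), sin (2 * PI * t)).

(** p-adic valuation of an integer (0 for a = 0, unused there). *)
Fixpoint vp_aux (fuel : nat) (p a : Z) : Z :=
  match fuel with
  | O => 0%Z
  | S f => if andb (Z.eqb (Z.modulo a p) 0) (negb (Z.eqb a 0))
           then (1 + vp_aux f p (Z.div a p))%Z else 0%Z
  end.
Definition vp (p a : Z) : Z := vp_aux (Z.to_nat (Z.abs a)) p a.

(** Points of Z[1/p] (dense in Q_p) are represented as pairs (a, n)
    standing for xi = a * p^(-n). *)

Definition padic_abs (p a n : Z) : R :=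
  if Z.eqb a 0 then 0 else powerRZ (IZR p) (n - vp p a).

Definition padic_frac (p a n : Z) : R :=
  if Z.leb n 0 then 0 else IZR (Z.modulo a (p ^ n)) / IZR (p ^ n).

Fixpoint Csum (g : nat -> C) (N : nat) : C :=
  match N with O => RtoC 0 | S M => Cplus (Csum g M) (g M) end.

(** Riemann sum for the Haar integral (Z_p of measure 1) over the shell
    {|xi|_p = p^n}: the shell is partitioned into the cosets
    a p^{-n} + p^{m-n} Z_p (0 <= a < p^m, p not dividing a), each of
    measure p^{n-m}. *)
Definition shell_riemann (p : Z) (f : Z -> Z -> C) (n : Z) (m : nat) : C :=
  Cmult (RtoC (powerRZ (IZR p) (n - Z.of_nat m)))
    (Csum (fun a => if Z.eqb (Z.modulo (Z.of_nat a) p) 0 then RtoC 0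
                    else f (Z.of_nat a) n)
          (Z.to_nat (p ^ Z.of_nat m))).

Definition is_shell_integral (p : Z) (f : Z -> Z -> C) (n : Z) (v : C) : Prop :=
  filterlim (shell_riemann p f n) eventually (locally v).

(** L is the integral of f over Q_p, understood as the (convergent)
    sum over all shells n in Z of the shell integrals. *)
Definition is_Qp_integral (p : Z) (f : Z -> Z -> C) (L : C) : Prop :=
  exists v : Z -> C,
    (forall n : Z, is_shell_integral p f n (v n)) /\
    exists l1 l2 : C,
      is_series (fun j : nat => v (- Z.of_nat j)%Z) l1 /\
      is_series (fun j : nat => v (Z.of_nat j + 1)%Z) l2 /\
      L = Cplus l1 l2.

Definition frak_x (chi : Z -> C) (p n : Z) : C := Cpow_Z (chi p) n.

(** Integrand e^{2 pi i xi} |xi|_p^{s-1} x_k(|xi|_p^{-1}) at xi = a p^{-n};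
    |xi|_p^{-1} = p^(vp a - n). *)
Definition gg_integrand (p : Z) (chi : Z -> C) (s : C) (a n : Z) : C :=
  Cmult (Cmult (e2pii (padic_frac p a n))
               (Cpow_pos (padic_abs p a n) (Cminus s (RtoC 1))))
        (frak_x chi p (vp p a - n)%Z).

(* Main.v *)
Require Import Defs.
From Stdlib Require Import Reals ZArith Znumtheory Lra Lia.
From Coquelicot Require Import Coquelicot.
Open Scope R_scope.
Open Scope R_scope.

Lemma Cpow_nat_eq c n : Cpow_nat c n = (c ^ n)%C.
Proof. induction n; simpl; [reflexivity| rewrite IHn; reflexivity]. Qed.

Lemma e2pii_add x y : e2pii (x + y) = Cmult (e2pii x) (e2pii y).
Proof.
  unfold e2pii, Cmult; simpl.
  replace (2 * PI * (x + y)) with (2*PI*x + 2*PI*y) by ring.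
  rewrite cos_plus, sin_plus. f_equal; ring.
Qed.

Lemma e2pii_nat (k : nat) : e2pii (INR k) = RtoC 1.
Proof.
  unfold e2pii. replace (2 * PI * INR k) with (0 + 2 * INR k * PI) by ring.
  rewrite cos_period, sin_period, cos_0, sin_0. reflexivity.
Qed.

Lemma e2pii_int (z : Z) : e2pii (IZR z) = RtoC 1.
Proof.
  destruct (Z_le_gt_dec 0 z).
  - rewrite <- (Z2Nat.id z) by lia. rewrite <- INR_IZR_INZ. apply e2pii_nat.
  - replace (IZR z) with (- INR (Z.to_nat (- z))).
    + unfold e2pii. rewrite Ropp_mult_distr_r_reverse, cos_neg, sin_neg.
      pose proof (e2pii_nat (Z.to_nat (-z))) as H. unfold e2pii in H.
      injection H as H1 H2. rewrite H1, H2. unfold RtoC. f_equal. ring.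
    + rewrite INR_IZR_INZ, Z2Nat.id by lia. rewrite opp_IZR. ring.
Qed.

Lemma e2pii_pow (a : nat) x : e2pii (INR a * x) = (e2pii x ^ a)%C.
Proof.
  induction a.
  - simpl. unfold e2pii. rewrite Rmult_0_l, Rmult_0_r, cos_0, sin_0. reflexivity.
  - rewrite S_INR. replace ((INR a + 1) * x) with (x + INR a * x) by ring.
    rewrite e2pii_add, IHa. reflexivity.
Qed.

Lemma e2pii_frac (a q : Z) : (0 < q)%Z ->
  e2pii (IZR (a mod q) / IZR q) = e2pii (IZR a / IZR q).
Proof.
  intros Hq. rewrite (Z_div_mod_eq_full a q) at 2.
  rewrite plus_IZR, mult_IZR.
  assert (IZR q <> 0) by (apply not_0_IZR; lia).
  replace ((IZR q * IZR (a / q) + IZR (a mod q)) / IZR q)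
    with (IZR (a mod q) / IZR q + IZR (a/q)) by (field; auto).
  rewrite e2pii_add, e2pii_int. symmetry; apply Cmult_1_r.
Qed.

Lemma Csum_ext f g N : (forall a, (a < N)%nat -> f a = g a) -> Csum f N = Csum g N.
Proof.
  induction N; intros H; simpl; auto.
  rewrite IHN by (intros; apply H; lia). rewrite H by lia. reflexivity.
Qed.

Lemma Csum_plus f g N : Csum (fun a => Cplus (f a) (g a)) N = Cplus (Csum f N) (Csum g N).
Proof. induction N; cbn [Csum]. apply injective_projections; simpl; ring.
  rewrite IHN. ring. Qed.

Lemma Csum_scal c f N : Csum (fun a => Cmult c (f a)) N = Cmult c (Csum f N).
Proof. induction N; cbn [Csum]. apply injective_projections; simpl; ring.
  rewrite IHN. ring. Qed.

Lemma Csum_const c N : Csum (fun _ => c) N = Cmult (RtoC (INR N)) c.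
Proof. induction N; cbn [Csum]. apply injective_projections; simpl; ring.
  rewrite IHN. rewrite S_INR. apply injective_projections; simpl; ring. Qed.

Lemma Csum_add g N L : Csum g (N + L) = Cplus (Csum g N) (Csum (fun i => g (N + i)%nat) L).
Proof. induction L; cbn [Csum]. rewrite Nat.add_0_r. apply injective_projections; simpl; ring.
  rewrite Nat.add_succ_r. cbn [Csum]. rewrite IHL. ring. Qed.

Lemma Csum_delta c n : Csum (fun i => if Nat.eqb i 0 then c else RtoC 0) (S n) = c.
Proof. induction n. simpl. apply injective_projections; simpl; ring.
  change (Csum (fun i => if Nat.eqb i 0 then c else RtoC 0) (S (S n))) with
    (Cplus (Csum (fun i => if Nat.eqb i 0 then c else RtoC 0) (S n)) (if Nat.eqb (S n) 0 then c else RtoC 0)).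
  rewrite IHn. simpl. apply injective_projections; simpl; ring. Qed.

Lemma Csum_geom z N : Cmult (Cminus z 1) (Csum (fun a => (z ^ a)%C) N) = Cminus (z ^ N)%C 1.
Proof. induction N; cbn [Csum]. apply injective_projections; simpl; ring.
  rewrite Cmult_plus_distr_l, IHN. change (z ^ S N)%C with (z * z ^ N)%C. ring. Qed.

Lemma e2pii_ne1 (q : R) : 2 <= q -> e2pii (1 / q) <> RtoC 1.
Proof.
  intros Hq H. unfold e2pii in H. injection H as H1 H2.
  assert (0 < 2 * PI * (1/q) <= PI).
  { pose proof PI_RGT_0. split. apply Rmult_lt_0_compat; [lra| apply Rdiv_lt_0_compat; lra].
    replace (2 * PI * (1/q)) with (PI * (2 / q)) by (field; lra).
    rewrite <- (Rmult_1_r PI) at 2. apply Rmult_le_compat_l; [lra|].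
    unfold Rdiv; apply (Rmult_le_reg_r q); [lra|]; rewrite Rmult_assoc, Rinv_l by lra; lra. }
  assert (cos (2 * PI * (1/q)) < cos 0).
  { apply cos_decreasing_1; lra. }
  rewrite cos_0 in H0. lra.
Qed.

Lemma geom_zero (q : R) (L : nat) : 2 <= q -> forall N, INR N = q * INR L ->
  Csum (fun a => e2pii (INR a / q)) N = RtoC 0.
Proof.
  intros Hq N HN.
  set (z := e2pii (1/q)).
  assert (Hs : Csum (fun a => e2pii (INR a / q)) N = Csum (fun a => (z ^ a)%C) N).
  { apply Csum_ext. intros. unfold z. rewrite <- e2pii_pow. f_equal. unfold Rdiv. ring. }
  rewrite Hs.
  assert (Hz : (z ^ N)%C = RtoC 1).
  { unfold z. rewrite <- e2pii_pow. rewrite HN.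
    replace (q * INR L * (1/q)) with (INR L) by (field; lra). apply e2pii_nat. }
  pose proof (Csum_geom z N) as G. rewrite Hz in G.
  assert (Cminus z 1 <> RtoC 0).
  { intro E. apply (e2pii_ne1 q Hq). fold z.
    replace z with (Cplus (Cminus z 1) 1) by ring. rewrite E. ring. }
  replace (Cminus (RtoC 1) 1) with (RtoC 0) in G by ring.
  transitivity (Cmult (Cinv (Cminus z 1)) (Cmult (Cminus z 1) (Csum (fun a => (z ^ a)%C) N))).
  field; auto. rewrite G. ring.
Qed.

Lemma Cpow_pos_ext x y z w : Re z * ln x = Re w * ln y -> Im z * ln x = Im w * ln y ->
  Cpow_pos x z = Cpow_pos y w.
Proof. intros H1 H2. unfold Cpow_pos. rewrite H1, H2. reflexivity. Qed.

Lemma Cpow_pos_add x z1 z2 : Cpow_pos x (Cplus z1 z2) = Cmult (Cpow_pos x z1) (Cpow_pos x z2).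
Proof.
  unfold Cpow_pos. unfold Re, Im. simpl.
  replace ((fst z1 + fst z2) * ln x) with (fst z1 * ln x + fst z2 * ln x) by ring.
  replace ((snd z1 + snd z2) * ln x) with (snd z1 * ln x + snd z2 * ln x) by ring.
  rewrite exp_plus, cos_plus, sin_plus.
  apply injective_projections; simpl; ring.
Qed.

Lemma Cmod_Cpow_pos x z : Cmod (Cpow_pos x z) = exp (Re z * ln x).
Proof.
  unfold Cpow_pos. rewrite Cmod_mult, Cmod_R.
  rewrite Rabs_pos_eq by (apply Rlt_le, exp_pos).
  assert (Hc: forall t, Cmod (cos t, sin t) = 1).
  { intro t. unfold Cmod. cbn [fst snd]. rewrite <- sqrt_1. f_equal.
    rewrite <- (sin2_cos2 t). unfold Rsqr. ring. }
  rewrite Hc. ring.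
Qed.

Lemma Cpow_pos_real x r : Cpow_pos x (RtoC r) = RtoC (exp (r * ln x)).
Proof.
  unfold Cpow_pos. simpl. rewrite Rmult_0_l, cos_0, sin_0.
  apply injective_projections; simpl; ring.
Qed.

Lemma ln_powerRZ x n : 0 < x -> ln (powerRZ x n) = IZR n * ln x.
Proof.
  intros Hx. destruct n; simpl.
  - rewrite ln_1. ring.
  - rewrite ln_pow by auto. rewrite INR_IZR_INZ, positive_nat_Z. reflexivity.
  - rewrite ln_Rinv by (apply pow_lt; auto). rewrite ln_pow by auto.
    rewrite INR_IZR_INZ, positive_nat_Z. rewrite <- Pos2Z.opp_pos, opp_IZR. ring.
Qed.

Lemma Cpow_pos_powerRZ x n z : 0 < x ->
  Cpow_pos (powerRZ x n) z = Cpow_pos x (Cmult (RtoC (IZR n)) z).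
Proof.
  intros Hx. apply Cpow_pos_ext; rewrite ln_powerRZ by auto; unfold Re, Im; simpl; ring.
Qed.

Lemma Cpow_pos_0 x : Cpow_pos x (RtoC 0) = RtoC 1.
Proof. rewrite Cpow_pos_real, Rmult_0_l, exp_0. reflexivity. Qed.

Lemma Cpow_pos_1 x : 0 < x -> Cpow_pos x (RtoC 1) = RtoC x.
Proof. intros. rewrite Cpow_pos_real, Rmult_1_l, exp_ln; auto. Qed.

Lemma Cpow_pos_m1 x : 0 < x -> Cpow_pos x (RtoC (-1)) = RtoC (/ x).
Proof. intros. rewrite Cpow_pos_real. replace (-1 * ln x) with (- ln x) by ring.
  rewrite exp_Ropp, exp_ln; auto. Qed.

Lemma Cpow_pos_nat x z (j : nat) : Cpow_pos x (Cmult (RtoC (INR j)) z) = (Cpow_pos x z ^ j)%C.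
Proof.
  induction j.
  - simpl. replace (Cmult (RtoC 0) z) with (RtoC 0) by ring. apply Cpow_pos_0.
  - replace (Cmult (RtoC (INR (S j))) z) with (Cplus z (Cmult (RtoC (INR j)) z)).
    + rewrite Cpow_pos_add, IHj. reflexivity.
    + rewrite S_INR. rewrite RtoC_plus. ring.
Qed.

Section Chi.
Variables (k : Z) (chi : Z -> C).
Hypothesis Hchi : is_dirichlet_character k chi.

Lemma chi_per_nat (j : nat) n : chi (n + Z.of_nat j * k)%Z = chi n.
Proof.
  destruct Hchi as [_ [Hp _]].
  revert n; induction j; intros n.
  - f_equal. lia.
  - replace (n + Z.of_nat (S j) * k)%Z with ((n + Z.of_nat j * k) + k)%Z by lia.
    rewrite Hp. apply IHj.
Qed.

Lemma chi_per (j : Z) n : chi (n + j * k)%Z = chi n.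
Proof.
  destruct (Z_le_gt_dec 0 j).
  - rewrite <- (Z2Nat.id j) by lia. apply chi_per_nat.
  - rewrite <- (chi_per_nat (Z.to_nat (-j)) (n + j * k)).
    f_equal. rewrite Z2Nat.id by lia. lia.
Qed.

Lemma chi_mod n : (0 < k)%Z -> chi n = chi (n mod k)%Z.
Proof.
  intros Hk. rewrite (Z_div_mod_eq_full n k) at 1.
  rewrite <- (chi_per (n / k) (n mod k)). f_equal. lia.
Qed.

Lemma chi_pow p (j : nat) : chi (p ^ Z.of_nat j)%Z = (chi p ^ j)%C.
Proof.
  destruct Hchi as [Hm [_ [H1 _]]].
  induction j.
  - simpl. exact H1.
  - rewrite Nat2Z.inj_succ, Z.pow_succ_r by lia. rewrite Hm, IHj. reflexivity.
Qed.

Lemma chi_nonzero p : rel_prime p k -> chi p <> RtoC 0.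
Proof.
  destruct Hchi as [Hm [_ [H1 _]]].
  intros Hr. apply Zis_gcd_bezout in Hr. destruct Hr as [u v Huv].
  intros H0.
  assert (chi (p * u)%Z = RtoC 1).
  { replace (p * u)%Z with (1 + (- v) * k)%Z by lia. rewrite chi_per. exact H1. }
  rewrite Hm, H0, Cmult_0_l in H.
  injection H as H. lra.
Qed.

Fixpoint bnd (f : nat -> R) (N : nat) : R :=
  match N with O => 0 | S m => bnd f m + f m end.

Lemma bnd_ge f N r : (forall i, 0 <= f i) -> (r < N)%nat -> f r <= bnd f N.
Proof.
  intros Hf. induction N; intros Hr; [lia|]. simpl.
  assert (0 <= bnd f N). { clear IHN Hr. induction N; simpl. lra. pose proof (Hf N). lra. }
  destruct (Nat.eq_dec r N). subst. lra. pose proof (IHN ltac:(lia)). pose proof (Hf N). lra.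
Qed.

Lemma chi_bounded : (0 < k)%Z -> exists M, forall n, Cmod (chi n) <= M.
Proof.
  intros Hk. exists (bnd (fun r => Cmod (chi (Z.of_nat r))) (Z.to_nat k)).
  intros n. rewrite (chi_mod n Hk).
  pose proof (Z.mod_pos_bound n k Hk).
  rewrite <- (Z2Nat.id (n mod k)) by lia.
  apply (bnd_ge (fun r => Cmod (chi (Z.of_nat r)))).
  intros; apply Cmod_ge_0. lia.
Qed.

Lemma chi_le1 p : (0 < k)%Z -> Cmod (chi p) <= 1.
Proof.
  intros Hk. destruct (chi_bounded Hk) as [M HM].
  destruct (Rle_lt_dec (Cmod (chi p)) 1) as [|Hgt]; auto. exfalso.
  assert (Rabs (Cmod (chi p)) > 1) by (rewrite Rabs_pos_eq by apply Cmod_ge_0; lra).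
  destruct (Pow_x_infinity _ H (M + 1)) as [N HN].
  specialize (HN N (le_n N)).
  rewrite Rabs_pos_eq in HN by (apply pow_le, Cmod_ge_0).
  rewrite <- Cmod_pow, <- chi_pow in HN.
  specialize (HM (p ^ Z.of_nat N)%Z). lra.
Qed.

End Chi.

Lemma INR_Z2N z : (0 <= z)%Z -> INR (Z.to_nat z) = IZR z.
Proof. intros. rewrite INR_IZR_INZ, Z2Nat.id; auto. Qed.

Section Filt.
Variable p : Z.
Hypothesis Hp : (1 < p)%Z.

Lemma filt_split (g h : nat -> C) M :
  (forall a, (Z.of_nat a mod p <> 0)%Z -> g a = h a) ->
  Csum (fun a => if Z.eqb (Z.of_nat a mod p) 0 then RtoC 0 else g a) (Z.to_nat p * M)
  = Cminus (Csum h (Z.to_nat p * M)) (Csum (fun b => h (Z.to_nat p * b)%nat) M).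
Proof.
  intros Hgh.
  set (P := Z.to_nat p).
  set (mlt := fun a => if Z.eqb (Z.of_nat a mod p) 0 then h a else RtoC 0).
  assert (E1 : forall N, Csum h N = Cplus (Csum (fun a => if Z.eqb (Z.of_nat a mod p) 0 then RtoC 0 else g a) N) (Csum mlt N)).
  { intros N. rewrite <- Csum_plus. apply Csum_ext. intros a _. unfold mlt.
    destruct (Z.eqb_spec (Z.of_nat a mod p) 0).
    - ring.
    - rewrite Hgh by auto. ring. }
  assert (E2 : Csum mlt (P * M) = Csum (fun b => h (P * b)%nat) M).
  { induction M.
    - rewrite Nat.mul_0_r. reflexivity.
    - rewrite Nat.mul_succ_r, Csum_add, IHM. cbn [Csum]. f_equal.
      assert (HP : P = S (P - 1)) by (unfold P; lia).
      rewrite <- (Csum_delta (h (P * M)%nat) (P - 1)). rewrite <- HP.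
      apply Csum_ext. intros i Hi. unfold mlt.
      assert (Hm : (Z.of_nat (P * M + i) mod p = Z.of_nat i)%Z).
      { rewrite Nat2Z.inj_add, Nat2Z.inj_mul. unfold P. rewrite Z2Nat.id by lia.
        rewrite Z.mul_comm, Z.add_comm, Z_mod_plus_full. apply Z.mod_small.
        unfold P in Hi. lia. }
      rewrite Hm. destruct (Nat.eqb_spec i 0).
      + subst. simpl. rewrite Nat.add_0_r. reflexivity.
      + destruct (Z.eqb_spec (Z.of_nat i) 0); [lia|reflexivity]. }
  rewrite E1, E2. ring.
Qed.

Lemma Ppow_succ m : Z.to_nat (p ^ Z.of_nat (S m)) = (Z.to_nat p * Z.to_nat (p ^ Z.of_nat m))%nat.
Proof.
  rewrite Nat2Z.inj_succ, Z.pow_succ_r by lia.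
  rewrite Z2Nat.inj_mul; [reflexivity| lia | apply Z.pow_nonneg; lia].
Qed.

Lemma geomp e m : (1 <= e)%Z -> (e <= m)%Z ->
  Csum (fun a => e2pii (INR a / IZR (p ^ e))) (Z.to_nat (p ^ m)) = RtoC 0.
Proof.
  intros He Hm.
  apply (geom_zero _ (Z.to_nat (p ^ (m - e)))).
  - assert (p ^ 1 <= p ^ e)%Z by (apply Z.pow_le_mono_r; lia).
    apply IZR_le. rewrite Z.pow_1_r in H. lia.
  - rewrite !INR_Z2N by (apply Z.pow_nonneg; lia).
    rewrite <- mult_IZR, <- Z.pow_add_r by lia. f_equal. f_equal. lia.
Qed.

End Filt.

Section Shell.
Variables (p : Z) (chi : Z -> C) (s : C).
Hypothesis Hp : (1 < p)%Z.

Definition cc (n : Z) : C :=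
  Cmult (Cpow_pos (powerRZ (IZR p) n) (Cminus s (RtoC 1))) (frak_x chi p (0 - n)).

Definition vv (n : Z) : C :=
  if Z.leb n 0 then Cmult (cc n) (RtoC (powerRZ (IZR p) n * (1 - / IZR p)))
  else if Z.eqb n 1 then Copp (cc n) else RtoC 0.

Lemma vp_coprime a : (0 < a)%Z -> (a mod p <> 0)%Z -> vp p a = 0%Z.
Proof.
  intros Ha Hm. unfold vp. destruct (Z.to_nat (Z.abs a)) eqn:E; [lia|].
  simpl. destruct (Z.eqb_spec (a mod p) 0); [contradiction|reflexivity].
Qed.

Lemma gg_simpl a n : (0 < a)%Z -> (a mod p <> 0)%Z ->
  gg_integrand p chi s a n = Cmult (e2pii (padic_frac p a n)) (cc n).
Proof.
  intros Ha Hm. unfold gg_integrand, cc, padic_abs.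
  rewrite vp_coprime by auto.
  destruct (Z.eqb_spec a 0); [lia|]. rewrite Z.sub_0_r. ring.
Qed.

Lemma IZR_p_pos : 0 < IZR p.
Proof. apply IZR_lt. lia. Qed.

Lemma shell_val n : exists N, forall m, (N <= m)%nat ->
  shell_riemann p (gg_integrand p chi s) n m = vv n.
Proof.
  exists (S (Z.to_nat n)). intros m Hm.
  destruct m as [|m']; [lia|].
  unfold shell_riemann. rewrite (Ppow_succ p Hp m').
  set (M := Z.to_nat (p ^ Z.of_nat m')).
  pose proof IZR_p_pos as Hp0.
  assert (HM : INR M = IZR p ^ m').
  { unfold M. rewrite INR_Z2N by (apply Z.pow_nonneg; lia). rewrite pow_IZR. reflexivity. }
  assert (HPM : INR (Z.to_nat p * M) = IZR p * IZR p ^ m').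
  { rewrite mult_INR, HM, INR_Z2N by lia. reflexivity. }
  assert (Hpow : powerRZ (IZR p) (n - Z.of_nat (S m')) = powerRZ (IZR p) n * / (IZR p * IZR p ^ m')).
  { unfold Z.sub. rewrite powerRZ_add by lra. rewrite powerRZ_neg'.
    rewrite <- pow_powerRZ. reflexivity. }
  unfold vv.
  destruct (Z.leb_spec n 0).
  - rewrite (filt_split p Hp _ (fun _ => cc n) M).
    2:{ intros a Ha. rewrite gg_simpl.
        - unfold padic_frac. destruct (Z.leb_spec n 0); [|lia].
          unfold e2pii. rewrite Rmult_0_r, cos_0, sin_0. apply Cmult_1_l.
        - destruct a; [simpl in Ha; rewrite Zmod_0_l in Ha; lia| lia].
        - auto. }
    rewrite !Csum_const.
    assert (R1 : Cmult (RtoC (powerRZ (IZR p) (n - Z.of_nat (S m'))))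
                   (Cminus (RtoC (INR (Z.to_nat p * M))) (RtoC (INR M)))
                 = RtoC (powerRZ (IZR p) n * (1 - / IZR p))).
    { rewrite <- RtoC_minus, <- RtoC_mult. f_equal. rewrite Hpow, HPM, HM.
      field. split; [lra|]. apply pow_nonzero. lra. }
    rewrite <- R1. ring.
  - set (q := IZR (p ^ n)).
    rewrite (filt_split p Hp _ (fun a => Cmult (cc n) (e2pii (INR a / q))) M).
    2:{ intros a Ha. rewrite gg_simpl.
        - unfold padic_frac. destruct (Z.leb_spec n 0); [lia|].
          rewrite e2pii_frac by (apply Z.pow_pos_nonneg; lia).
          rewrite <- INR_IZR_INZ. apply Cmult_comm.
        - destruct a; [simpl in Ha; rewrite Zmod_0_l in Ha; lia| lia].
        - auto. }
    rewrite !Csum_scal.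
    replace (Z.to_nat p * M)%nat with (Z.to_nat (p ^ Z.of_nat (S m'))) by (unfold M; apply Ppow_succ; auto).
    unfold q. rewrite (geomp p Hp n (Z.of_nat (S m'))) by lia.
    assert (Hq : IZR (p ^ n) = IZR p * IZR (p ^ (n - 1))).
    { rewrite <- mult_IZR, <- Z.pow_succ_r by lia. f_equal. f_equal. lia. }
    rewrite (Csum_ext _ (fun b => e2pii (INR b / IZR (p ^ (n - 1))))).
    2:{ intros b _. f_equal. rewrite mult_INR, INR_Z2N, Hq by lia. field.
        split; [|lra]. apply not_0_IZR. pose proof (Z.pow_pos_nonneg p (n-1)). lia. }
    destruct (Z.eqb_spec n 1).
    + subst n. simpl (1 - 1)%Z. rewrite (Csum_ext _ (fun _ => RtoC 1)).
      2:{ intros b _. simpl. rewrite Rdiv_1_r. apply e2pii_nat. }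
      rewrite Csum_const, HM.
      assert (R1 : Cmult (RtoC (powerRZ (IZR p) (1 - Z.of_nat (S m')))) (RtoC (IZR p ^ m')) = RtoC 1).
      { rewrite <- RtoC_mult. f_equal. rewrite Hpow. simpl powerRZ. field. split; [|lra].
        apply pow_nonzero. lra. }
      transitivity (Copp (Cmult (Cmult (RtoC (powerRZ (IZR p) (1 - Z.of_nat (S m')))) (RtoC (IZR p ^ m'))) (cc 1))).
      ring. rewrite R1. ring.
    + unfold M. rewrite (geomp p Hp (n - 1) (Z.of_nat m')) by lia. ring.
Qed.

End Shell.

Lemma geom_partial (w : C) N : Cmult (Cminus 1 w) (sum_n (fun j => (w ^ j)%C) N) = Cminus 1 (w ^ S N)%C.
Proof.
  induction N.
  - rewrite sum_O. simpl. ring.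
  - rewrite sum_Sn. change (plus ?a ?b) with (Cplus a b).
    rewrite Cmult_plus_distr_l, IHN. change (w ^ S (S N))%C with (w * w ^ S N)%C.
    change (w ^ S N)%C with (w * w ^ N)%C. ring.
Qed.

Lemma geomC (w : C) : Cmod w < 1 -> is_series (fun j => (w ^ j)%C) (Cinv (Cminus 1 w)).
Proof.
  intros Hw.
  assert (Hne : Cminus 1 w <> RtoC 0).
  { intro E. assert (w = RtoC 1). { replace w with (Cminus 1 (Cminus 1 w)) by ring. rewrite E. ring. }
    rewrite H, Cmod_1 in Hw. lra. }
  pose proof (proj1 (Cmod_gt_0 _) Hne) as Hpos.
  unfold is_series. apply filterlim_locally_ball_norm. intros eps.
  assert (Habs : Rabs (Cmod w) < 1) by (rewrite Rabs_pos_eq by apply Cmod_ge_0; auto).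
  destruct (pow_lt_1_zero _ Habs (eps * Cmod (Cminus 1 w))) as [N HN].
  { apply Rmult_lt_0_compat; [apply cond_pos| auto]. }
  exists N. intros n Hn. unfold ball_norm.
  change (norm (minus (sum_n (fun j => (w ^ j)%C) n) (Cinv (Cminus 1 w))))
    with (Cmod (Cminus (sum_n (fun j => (w ^ j)%C) n) (Cinv (Cminus 1 w)))).
  assert (E : Cminus (sum_n (fun j => (w ^ j)%C) n) (Cinv (Cminus 1 w))
              = Copp (Cmult (w ^ S n)%C (Cinv (Cminus 1 w)))).
  { pose proof (geom_partial w n) as G.
    transitivity (Cmult (Cinv (Cminus 1 w)) (Cminus (Cmult (Cminus 1 w) (sum_n (fun j => (w ^ j)%C) n)) 1)).
    field; auto. rewrite G. field; auto. }
  rewrite E.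
  rewrite Cmod_opp. rewrite Cmod_mult, Cmod_inv, Cmod_pow by auto.
  specialize (HN (S n) ltac:(lia)). rewrite Rabs_pos_eq in HN by (apply pow_le, Cmod_ge_0).
  apply (Rmult_lt_reg_r (Cmod (Cminus 1 w))); auto.
  rewrite Rmult_assoc, Rinv_l by lra. lra.
Qed.

Lemma Cpow_Z_nat c (j : nat) : Cpow_Z c (Z.of_nat j) = (c ^ j)%C.
Proof.
  destruct j. reflexivity.
  simpl Z.of_nat. unfold Cpow_Z. rewrite SuccNat2Pos.id_succ. apply Cpow_nat_eq.
Qed.

Lemma series_tail (v : nat -> C) : (forall j, (1 <= j)%nat -> v j = RtoC 0) -> is_series v (v O).
Proof.
  intros H. unfold is_series.
  apply (filterlim_ext (fun _ => v O)); [|apply filterlim_const].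
  intros N. induction N. rewrite sum_O. reflexivity.
  rewrite sum_Sn, <- IHN, (H (S N)) by lia. change (plus ?a ?b) with (Cplus a b). ring.
Qed.

Theorem mainTheorem1 (p k : Z) (chi : Z -> C) (s : C) :
  prime p -> (0 < k)%Z -> ~ (p | k)%Z ->
  is_dirichlet_character k chi ->
  (0 < Re s)%R ->
  is_Qp_integral p (gg_integrand p chi s)
    (Cdiv (Cminus (chi p) (Cpow_pos (IZR p) (Cminus s (RtoC 1))))
          (Cmult (chi p)
                 (Cminus (RtoC 1) (Cmult (chi p) (Cpow_pos (IZR p) (Copp s)))))).
Proof.
  intros Hpr Hk Hpk Hchi Hs.
  pose proof (prime_ge_2 p Hpr) as Hp2.
  assert (Hp : (1 < p)%Z) by lia.
  assert (Hp0 : 0 < IZR p) by (apply IZR_lt; lia).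
  assert (Hrel : rel_prime p k) by (apply prime_rel_prime; auto).
  pose proof (chi_nonzero k chi Hchi p Hrel) as Hx0.
  pose proof (chi_le1 k chi Hchi p Hk) as Hx1.
  set (x := chi p) in *.
  set (Q := Cpow_pos (IZR p) (Copp s)).
  set (P' := Cpow_pos (IZR p) (Cminus s (RtoC 1))).
  assert (HlnP : 0 < ln (IZR p)).
  { rewrite <- ln_1. apply ln_increasing; [lra|]. apply IZR_lt; lia. }
  assert (HQ : Cmod Q < 1).
  { unfold Q. rewrite Cmod_Cpow_pos. rewrite <- exp_0. apply exp_increasing.
    simpl. unfold Re in Hs |- *. simpl. nra. }
  assert (Hw : Cmod (Cmult x Q) < 1).
  { rewrite Cmod_mult. pose proof (Cmod_ge_0 Q). pose proof (Cmod_ge_0 x). nra. }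
  assert (Hne : Cminus 1 (Cmult x Q) <> RtoC 0).
  { intro E. assert (Cmult x Q = RtoC 1). { replace (Cmult x Q) with (Cminus 1 (Cminus 1 (Cmult x Q))) by ring. rewrite E. ring. }
    rewrite H, Cmod_1 in Hw. lra. }
  exists (vv p chi s). split.
  { intros n. unfold is_shell_integral.
    destruct (shell_val p chi s Hp n) as [N HN].
    apply (filterlim_ext_loc (fun _ => vv p chi s n)); [|apply filterlim_const].
    exists N. intros m Hm. symmetry. apply HN; auto. }
  exists (Cmult (RtoC (1 - / IZR p)) (Cinv (Cminus 1 (Cmult x Q)))).
  exists (vv p chi s 1).
  split; [|split].
  - apply (is_series_ext (fun j => scal (RtoC (1 - / IZR p)) ((Cmult x Q) ^ j)%C)).
    2:{ exact (is_series_scal_l (RtoC (1 - / IZR p)) _ _ (geomC _ Hw)). }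
    intros j. change (scal ?a ?b) with (Cmult a b).
    unfold vv. destruct (Z.leb_spec (- Z.of_nat j) 0); [|lia].
    unfold cc, frak_x. replace (0 - - Z.of_nat j)%Z with (Z.of_nat j) by lia.
    rewrite Cpow_Z_nat. fold x. rewrite Cpow_mult_l.
    rewrite RtoC_mult.
    assert (E1 : RtoC (powerRZ (IZR p) (- Z.of_nat j)) = Cpow_pos (powerRZ (IZR p) (- Z.of_nat j)) (RtoC 1)).
    { rewrite Cpow_pos_1; auto. apply powerRZ_lt; auto. }
    rewrite E1.
    assert (E2 : Cmult (Cpow_pos (powerRZ (IZR p) (- Z.of_nat j)) (Cminus s 1))
                       (Cpow_pos (powerRZ (IZR p) (- Z.of_nat j)) (RtoC 1)) = (Q ^ j)%C).
    { rewrite <- Cpow_pos_add. unfold Q. rewrite <- Cpow_pos_nat.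
      apply Cpow_pos_ext; rewrite ln_powerRZ by auto; rewrite opp_IZR, <- INR_IZR_INZ;
        unfold Re, Im; simpl; ring. }
    transitivity (Cmult (RtoC (1 - / IZR p))
       (Cmult (x ^ j)%C (Cmult (Cpow_pos (powerRZ (IZR p) (- Z.of_nat j)) (Cminus s 1))
                       (Cpow_pos (powerRZ (IZR p) (- Z.of_nat j)) (RtoC 1))))).
    rewrite E2. reflexivity. match goal with |- ?a = ?b => change (@eq C a b) end. ring.
  - apply (is_series_ext (fun j => vv p chi s (Z.of_nat j + 1)) (fun j => vv p chi s (Z.of_nat j + 1))); [reflexivity|].
    apply series_tail. intros j Hj. unfold vv.
    destruct (Z.leb_spec (Z.of_nat j + 1) 0); [lia|].
    destruct (Z.eqb_spec (Z.of_nat j + 1) 1); [lia|reflexivity].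
  - unfold vv. change (Z.leb 1 0) with false. change (Z.eqb 1 1) with true. cbv iota.
    unfold cc, frak_x.
    replace (powerRZ (IZR p) 1) with (IZR p) by (simpl; ring).
    change (Cpow_Z (chi p) (0 - 1)) with (Cinv (Cpow_nat x 1)).
    simpl Cpow_nat. fold P'.
    assert (HPQ : RtoC (1 - / IZR p) = Cminus 1 (Cmult P' Q)).
    { unfold P', Q. rewrite <- Cpow_pos_add.
      replace (Cplus (Cminus s 1) (Copp s)) with (RtoC (-1)) by (apply injective_projections; simpl; ring).
      rewrite Cpow_pos_m1 by auto. rewrite RtoC_minus. reflexivity. }
    rewrite HPQ. match goal with |- ?a = ?b => change (@eq C a b) end. field. split; auto.
Qed.
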